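(* Let $X$ be a metric space with bounded geometry. The set of ghost operators in the uniform quasi-local algebra $C^*_{uq}(X)$ is a two-sided closed ideal of $C^*_{uq}(X)$.
   Context: Bounded geometry: $\sup_x|B(x,R)|<\infty$ for all $R>0$. For $T\in\mathfrak B(\ell^2(X))$, $T_{x,y}=\langle T\delta_y,\delta_x\rangle$. $T$ is a ghost operator if for every $\varepsilon>0$ there is a bounded $B\subseteq X$ with $|T_{x,y}|<\varepsilon$ for all $x,y\in X\setminus B$. $T$ is quasi-local if for every $\varepsilon>0$ there is $R>0$ such that $\|\chi_AT\chi_B\|\leq\varepsilon$ for all $A,B\subseteq X$ with $d(A,B)\geq R$ ($\chi_A$ = multiplication by the characteristic function). $C^*_{uq}(X)$ is the $C^*$-algebra of all quasi-local operators on $\ell^2(X)$. *)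

(* Defs.v *)
From HB Require Import structures.
From mathcomp Require Import all_boot all_order all_algebra.
From mathcomp Require Import all_classical all_reals.
From mathcomp Require Import ereal esum.
From mathcomp.real_closed Require Import complex.

Set Implicit Arguments.
Unset Strict Implicit.
Unset Printing Implicit Defensive.

Import Order.TTheory GRing.Theory Num.Theory.
Local Open Scope classical_set_scope.
Local Open Scope ring_scope.

Section Defs.
Variable R : realType.
Local Notation C := (R[i])%type.

Definition cabs (z : C) : R := Num.sqrt (complex.Re z ^+ 2 + complex.Im z ^+ 2).

Variable X : choiceType.

Definition is_metric (d : X -> X -> R) : Prop :=
  [/\ forall x y, 0 <= d x y,
      forall x y, d x y = 0 <-> x = y,
      forall x y, d x y = d y x &
      forall x y z, d x z <= d x y + d y z].

Definition bounded_geometry (d : X -> X -> R) : Prop :=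
  forall r : R, exists N : nat, forall (x : X) (s : seq X),
    uniq s -> (forall y, y \in s -> d x y <= r) -> (size s <= N)%N.

Definition bounded_set (d : X -> X -> R) (B : set X) : Prop :=
  exists r : R, forall a b, B a -> B b -> d a b <= r.

Definition sqnorm (f : X -> C) : \bar R :=
  (\esum_(x in [set: X]) ((cabs (f x)) ^+ 2)%:E)%E.
Definition l2 (f : X -> C) : Prop := (sqnorm f < +oo)%E.
Definition l2norm (f : X -> C) : R := Num.sqrt (fine (sqnorm f)).

(* operators on ell^2(X): maps on functions, only their restriction to
   ell^2(X) matters *)
Definition op := (X -> C) -> (X -> C).

Definition bounded_op (T : op) : Prop :=
  [/\ forall f, l2 f -> l2 (T f),
      forall (a : C) f g, l2 f -> l2 g ->
         T (fun x => a * f x + g x) = (fun x => a * T f x + T g x) &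
      exists M : R, forall f, l2 f -> l2norm (T f) <= M * l2norm f].

Definition opnorm (T : op) : R :=
  sup [set l2norm (T f) | f in [set f | l2 f /\ l2norm f <= 1]].

Definition opadd (S T : op) : op := fun f x => S f x + T f x.
Definition opsub (S T : op) : op := fun f x => S f x - T f x.
Definition opscale (a : C) (T : op) : op := fun f x => a * T f x.
Definition opcomp (S T : op) : op := fun f => S (T f).
Definition op0 : op := fun _ _ => 0.

Definition chi (A : set X) : op := fun f x => if `[< A x >] then f x else 0.

Definition delta (y : X) : X -> C := fun x => if x == y then 1 else 0.

(* matrix coefficient T_{x,y} = <T delta_y, delta_x> *)
Definition coef (T : op) (x y : X) : C := T (delta y) x.

Definition ghost (d : X -> X -> R) (T : op) : Prop :=
  forall eps : R, 0 < eps -> exists B : set X, bounded_set d B /\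
    forall x y, ~ B x -> ~ B y -> cabs (coef T x y) < eps.

Definition quasi_local (d : X -> X -> R) (T : op) : Prop :=
  forall eps : R, 0 < eps -> exists r : R, 0 < r /\
    forall A B : set X, (forall a b, A a -> B b -> r <= d a b) ->
      opnorm (opcomp (chi A) (opcomp T (chi B))) <= eps.

Definition in_Cuq (d : X -> X -> R) (T : op) : Prop :=
  bounded_op T /\ quasi_local d T.

Definition ghost_uq (d : X -> X -> R) (T : op) : Prop :=
  in_Cuq d T /\ ghost d T.

End Defs.

(* Main.v *)
Require Import Defs.
From HB Require Import structures.
From mathcomp Require Import all_boot all_order all_algebra.
From mathcomp Require Import all_classical all_reals.
From mathcomp Require Import ereal esum.
From mathcomp.real_closed Require Import complex.
From mathcomp Require Import ring lra.
Import Order.TTheory GRing.Theory Num.Theory.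
Local Open Scope classical_set_scope.
Local Open Scope ring_scope.

Set Implicit Arguments.
Unset Strict Implicit.
Unset Printing Implicit Defensive.

Section L.
Variable R : realType.
Local Notation C := (R[i])%type.

Lemma cabsE (z : C) : cabs z = Normc.normc z.
Proof. by case: z. Qed.

Lemma cabs_ge0 (z : C) : 0 <= cabs z.
Proof. exact: sqrtr_ge0. Qed.

Lemma cabsD (z w : C) : cabs (z + w) <= cabs z + cabs w.
Proof. rewrite !cabsE; exact: le_normcD. Qed.

Lemma cabsM (z w : C) : cabs (z * w) = cabs z * cabs w.
Proof. rewrite !cabsE; exact: Normc.normcM. Qed.

Lemma cabs0 : cabs (0 : C) = 0.
Proof. rewrite cabsE; exact: Normc.normc0. Qed.

Lemma cabs1 : cabs (1 : C) = 1.
Proof. rewrite cabsE; exact: Normc.normc1. Qed.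

Lemma cabs_eq0 (z : C) : cabs z = 0 -> z = 0.
Proof. rewrite cabsE; exact: Normc.eq0_normc. Qed.

Lemma cabsR (r : R) : cabs (real_complex R r) = `|r|.
Proof. by rewrite /cabs /= expr0n /= addr0 sqrtr_sqr. Qed.

Lemma cabsN (w : C) : cabs (- w) = cabs w.
Proof. rewrite !cabsE; exact: (@normcN R). Qed.

Lemma cabsB (z w : C) : cabs (z - w) <= cabs z + cabs w.
Proof. by apply: (le_trans (cabsD _ _)); rewrite cabsN. Qed.
End L.
Section ES.
Variable R : realType.
Variable T : choiceType.

Lemma esumZ (S : set T) (a : T -> \bar R) (c : R) : 0 <= c ->
  (forall i, (0 <= a i)%E) ->
  (\esum_(i in S) (c%:E * a i) = c%:E * \esum_(i in S) a i)%E.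
Proof.
move=> c0 a0.
have le1 : forall (c : R) (a : T -> \bar R), 0 < c -> (forall i, (0 <= a i)%E) ->
    (\esum_(i in S) (c%:E * a i) <= c%:E * \esum_(i in S) a i)%E.
  move=> c' a' c'0 a'0; apply: ge_ereal_sup => _ [F [finF FS]] <-.
  rewrite -ge0_mule_fsumr//; apply: lee_wpmul2l; first by rewrite lee_fin ltW.
  by apply: ereal_sup_ubound; exists F.
have [->|cne0] := eqVneq c 0.
  by rewrite mul0e esum1// => i _; rewrite mul0e.
have cp : 0 < c by rewrite lt_neqAle eq_sym cne0.
apply/eqP; rewrite eq_le le1//=.
have cip : 0 < c^-1 by rewrite invr_gt0.
have := le1 c^-1 (fun i => c%:E * a i)%E cip.
rewrite (_ : (fun i => c^-1%:E * (c%:E * a i))%E = a); last first.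
  by apply/funext => i; rewrite muleA -EFinM mulVf// mul1e.
move=> h.
have h2 : forall i, (0 <= c%:E * a i)%E by move=> i; rewrite mule_ge0// lee_fin ltW.
move: (h h2) => {}h; have : (\esum_(i in S) a i <= c^-1%:E * \esum_(i in S) (c%:E * a i))%E.
  apply: le_trans h; exact: lexx.
by rewrite lee_pdivlMl.
Qed.
End ES.
Section L2S.
Variable R : realType.
Variable X : choiceType.
Local Notation C := (R[i])%type.
Implicit Types f g : X -> C.

Lemma sqnorm_ge0 f : (0 <= sqnorm f)%E.
Proof. by apply: esum_ge0 => x _; rewrite lee_fin sqr_ge0. Qed.

Definition nn f : R := fine (sqnorm f).

Lemma sqnormE f : l2 f -> sqnorm f = (nn f)%:E.
Proof. by move=> h; rewrite /nn fineK// ge0_fin_numE// sqnorm_ge0. Qed.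

Lemma nn_ge0 f : 0 <= nn f.
Proof. exact/fine_ge0/sqnorm_ge0. Qed.

Lemma l2norm_ge0 f : 0 <= l2norm f.
Proof. exact: sqrtr_ge0. Qed.

Lemma l2normE f : l2norm f = Num.sqrt (nn f).
Proof. by []. Qed.

Lemma nnE f : nn f = l2norm f ^+ 2.
Proof. by rewrite l2normE sqr_sqrtr// nn_ge0. Qed.

Lemma sqnorm_le f g : (forall x, cabs (f x) <= cabs (g x)) ->
  (sqnorm f <= sqnorm g)%E.
Proof.
move=> h; apply: le_esum => x _; rewrite lee_fin.
by apply: lerXn2r; rewrite ?nnegrE ?cabs_ge0.
Qed.

Lemma l2_le f g : (forall x, cabs (f x) <= cabs (g x)) -> l2 g -> l2 f.
Proof. by move=> h; rewrite /l2; apply: le_lt_trans; apply: sqnorm_le. Qed.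

Lemma nn_le f g : (forall x, cabs (f x) <= cabs (g x)) -> l2 g -> nn f <= nn g.
Proof.
move=> h lg; have lf := l2_le h lg.
by rewrite -lee_fin -!sqnormE//; apply: sqnorm_le.
Qed.

Lemma l2norm_le f g : (forall x, cabs (f x) <= cabs (g x)) -> l2 g ->
  l2norm f <= l2norm g.
Proof. by move=> h lg; rewrite !l2normE ler_sqrt ?nn_ge0// nn_le. Qed.

Lemma pt_le_nn f x : l2 f -> cabs (f x) ^+ 2 <= nn f.
Proof.
move=> lf; rewrite -lee_fin -sqnormE//; apply: esum_ge.
exists [set x]; first by split => //; exact: finite_set1.
by rewrite fsbig_set1.
Qed.

Lemma pt_le f x : l2 f -> cabs (f x) <= l2norm f.
Proof.
move=> lf; rewrite -(ger0_norm (cabs_ge0 (f x))) -sqrtr_sqr l2normE.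
by rewrite ler_sqrt ?nn_ge0// pt_le_nn.
Qed.

Lemma l2norm0_eq f : l2 f -> l2norm f = 0 -> f = (fun _ => 0).
Proof.
move=> lf h; apply/funext => x; apply: cabs_eq0; apply/eqP.
by rewrite eq_le cabs_ge0 andbT -h pt_le.
Qed.

Lemma sqnorm0 : sqnorm (fun _ : X => (0 : C)) = 0%E.
Proof. by rewrite /sqnorm esum1// => x _; rewrite cabs0 expr0n. Qed.

Lemma l2_0 : l2 (fun _ : X => (0 : C)).
Proof. by rewrite /l2 sqnorm0 ltry. Qed.

Lemma l2norm0 : l2norm (fun _ : X => (0 : C)) = 0.
Proof. by rewrite /l2norm sqnorm0 /= sqrtr0. Qed.

Lemma sqnorm_scale (a : C) f :
  sqnorm (fun x => a * f x) = (((cabs a) ^+ 2)%:E * sqnorm f)%E.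
Proof.
rewrite /sqnorm -esumZ ?sqr_ge0//; last by move=> i; rewrite lee_fin sqr_ge0.
by apply: eq_esum => x _; rewrite cabsM exprMn EFinM.
Qed.

Lemma l2_scale (a : C) f : l2 f -> l2 (fun x => a * f x).
Proof.
move=> lf; rewrite /l2 sqnorm_scale sqnormE// -EFinM ltry//.
Qed.

Lemma nn_scale (a : C) f : l2 f -> nn (fun x => a * f x) = cabs a ^+ 2 * nn f.
Proof. by move=> lf; rewrite /nn sqnorm_scale sqnormE//. Qed.

Lemma l2norm_scale (a : C) f : l2 f -> l2norm (fun x => a * f x) = cabs a * l2norm f.
Proof.
move=> lf; rewrite !l2normE nn_scale// sqrtrM ?sqr_ge0// sqrtr_sqr.
by rewrite ger0_norm ?cabs_ge0.
Qed.

Lemma pt_add_bound (u v : C) (t : R) : 0 < t ->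
  cabs (u + v) ^+ 2 <= (1 + t) * cabs u ^+ 2 + (1 + t^-1) * cabs v ^+ 2.
Proof.
move=> t0.
have h1 : cabs (u + v) ^+ 2 <= (cabs u + cabs v) ^+ 2.
  by apply: lerXn2r; rewrite ?nnegrE ?addr_ge0 ?cabs_ge0// cabsD.
apply: (le_trans h1).
set p := cabs u; set q := cabs v.
have tt : t * t^-1 = 1 by rewrite mulfV// gt_eqF.
have ti : 0 < t^-1 by rewrite invr_gt0.
have : 0 <= t^-1 * (t * p - q) ^+ 2 by rewrite mulr_ge0// ?sqr_ge0// ltW.
move: tt ti; set s := t^-1 => tt ti.
have e : s * (t * p - q) ^+ 2 = (t * s) * t * p ^+ 2 - 2 * (t * s) * p * q + s * q ^+ 2 by ring.
rewrite e tt !mul1r => H.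
rewrite -subr_ge0.
have -> : (1 + t) * p ^+ 2 + (1 + s) * q ^+ 2 - (p + q) ^+ 2 = t * p ^+ 2 - 2 * p * q + s * q ^+ 2 by ring.
by rewrite mulr1 in H.
Qed.

Lemma sqnorm_add f g (t : R) : 0 < t ->
  (sqnorm (fun x => (f x + g x)%R) <= (1 + t)%:E * sqnorm f + (1 + t^-1)%:E * sqnorm g)%E.
Proof.
move=> t0.
have t1 : 0 <= 1 + t by rewrite addr_ge0// ltW.
have t2 : 0 <= 1 + t^-1 by rewrite addr_ge0// ltW// invr_gt0.
rewrite /sqnorm -!esumZ//; try by move=> i; rewrite lee_fin sqr_ge0.
rewrite -esumD; try by move=> i _; rewrite -EFinM lee_fin mulr_ge0// sqr_ge0.
by apply: le_esum => x _; rewrite -!EFinM -EFinD lee_fin pt_add_bound.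
Qed.

Lemma l2_add f g : l2 f -> l2 g -> l2 (fun x => f x + g x).
Proof.
move=> lf lg; rewrite /l2; apply: le_lt_trans (sqnorm_add f g ltr01) _.
by rewrite (sqnormE lf) (sqnormE lg) -!EFinM -EFinD ltry.
Qed.

Lemma l2_lin (a : C) f g : l2 f -> l2 g -> l2 (fun x => a * f x + g x).
Proof. by move=> lf lg; apply: (l2_add (l2_scale a lf) lg). Qed.

Lemma minkowski f g : l2 f -> l2 g ->
  l2norm (fun x => f x + g x) <= l2norm f + l2norm g.
Proof.
move=> lf lg.
have [f0|fn0] := eqVneq (l2norm f) 0.
  rewrite (l2norm0_eq lf f0) l2norm0 add0r; apply: l2norm_le => // x.
  by rewrite add0r.
have [g0|gn0] := eqVneq (l2norm g) 0.
  rewrite (l2norm0_eq lg g0) l2norm0 addr0; apply: l2norm_le => // x.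
  by rewrite addr0.
set a := l2norm f in fn0 *; set b := l2norm g in gn0 *.
have a0 : 0 < a by rewrite lt_neqAle eq_sym fn0 l2norm_ge0.
have b0 : 0 < b by rewrite lt_neqAle eq_sym gn0 l2norm_ge0.
have tp : 0 < b / a by rewrite divr_gt0.
have lfg := l2_add lf lg.
have := sqnorm_add f g tp.
rewrite (sqnormE lf) (sqnormE lg) (sqnormE lfg) -!EFinM -EFinD lee_fin.
rewrite !nnE -/a -/b => h.
rewrite -(ger0_norm (l2norm_ge0 _)) -(ger0_norm (addr_ge0 (ltW a0) (ltW b0))).
rewrite -[X in X <= _]sqrtr_sqr -[X in _ <= X]sqrtr_sqr ler_sqrt ?sqr_ge0//.
apply: (le_trans h); rewrite le_eqVlt; apply/orP; left; apply/eqP.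
rewrite invf_div; field.
by rewrite gt_eqF ?b0 ?a0.
Qed.

Lemma sqnorm_delta (y : X) : sqnorm (delta R y) = 1%E.
Proof.
rewrite /sqnorm (_ : (fun x => ((cabs (delta R y x)) ^+ 2)%:E) =
   (fun x => if x \in [set y] then 1%E else 0%E)); last first.
  apply/funext => x; rewrite /delta; case: (eqVneq x y) => [->|nxy].
    by rewrite mem_set// cabs1 expr1n.
  rewrite memNset; last by apply/eqP.
  by rewrite cabs0 expr0n.
transitivity (\esum_(x in [set y]) (1%E : \bar R)).
  by rewrite [RHS]esum_mkcond.
by rewrite esum_set1.
Qed.

Lemma l2_delta (y : X) : l2 (delta R y).
Proof. by rewrite /l2 sqnorm_delta ltry. Qed.

Lemma l2norm_delta (y : X) : l2norm (delta R y) = 1.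
Proof. by rewrite /l2norm sqnorm_delta /= sqrtr1. Qed.

Lemma cabs_chi (A : set X) f x : cabs (chi A f x) <= cabs (f x).
Proof. by rewrite /chi; case: ifP => _; rewrite ?cabs0 ?cabs_ge0. Qed.

Lemma l2_chi (A : set X) f : l2 f -> l2 (chi A f).
Proof. by apply: l2_le => x; apply: cabs_chi. Qed.

Lemma l2norm_chi (A : set X) f : l2 f -> l2norm (chi A f) <= l2norm f.
Proof. by apply: l2norm_le => x; apply: cabs_chi. Qed.

End L2S.
Section Ops.
Variable R : realType.
Variable X : choiceType.
Local Notation C := (R[i])%type.
Local Notation op := (op R X).
Implicit Types f g : X -> C.
Implicit Types U V : op.

Lemma bop_l2 U f : bounded_op U -> l2 f -> l2 (U f).
Proof. by case=> h _ _; apply: h. Qed.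

Lemma bop_zero U : bounded_op U -> U (fun _ => 0) = (fun _ => 0).
Proof.
case=> _ lin _; have := lin (-1) (fun _ => 0) (fun _ => 0) (l2_0 R X) (l2_0 R X).
rewrite (_ : (fun x : X => -1 * 0 + 0) = (fun _ => 0 : C)); last first.
  by apply/funext => x; rewrite mulr0 addr0.
move=> h; apply/funext => x; rewrite h /= mulN1r addNr //.
Qed.

Lemma bop_add U f g : bounded_op U -> l2 f -> l2 g ->
  U (fun x => f x + g x) = (fun x => U f x + U g x).
Proof.
case=> _ lin _ lf lg; have := lin 1 f g lf lg.
rewrite (_ : (fun x : X => 1 * f x + g x) = (fun x => f x + g x)); last first.
  by apply/funext => x; rewrite mul1r.
by move=> ->; apply/funext => x; rewrite mul1r.
Qed.

Lemma bop_scale U (a : C) f : bounded_op U -> l2 f ->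
  U (fun x => a * f x) = (fun x => a * U f x).
Proof.
move=> bU lf; case: (bU) => _ lin _; have := lin a f _ lf (l2_0 R X).
rewrite (_ : (fun x : X => a * f x + 0) = (fun x => a * f x)); last first.
  by apply/funext => x; rewrite addr0.
by move=> ->; apply/funext => x; rewrite (bop_zero bU) addr0.
Qed.

Lemma chi_split (A : set X) f : f = (fun x => chi A f x + chi (~` A) f x).
Proof.
apply/funext => x; rewrite /chi; case: (pselect (A x)) => h.
  by rewrite (asboolT h) asboolF ?addr0.
by rewrite asboolF// asboolT// add0r.
Qed.

Lemma bop_split U (A : set X) f : bounded_op U -> l2 f ->
  U f = (fun x => U (chi A f) x + U (chi (~` A) f) x).
Proof.
move=> bU lf; rewrite {1}(chi_split A f) bop_add//; exact: l2_chi.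
Qed.

Definition ball_set U := [set l2norm (U f) | f in [set f | l2 f /\ l2norm f <= 1]].

Lemma opnorm_ub U (M : R) :
  (forall f, l2 f -> l2norm f <= 1 -> l2norm (U f) <= M) ->
  forall f, l2 f -> l2norm f <= 1 -> l2norm (U f) <= opnorm U.
Proof.
move=> hM f lf nf; apply: (@ub_le_sup _ (ball_set U)).
  by exists M => _ [g [lg ng] <-]; apply: hM.
by exists f.
Qed.

Lemma opnorm_le U (M : R) :
  (forall f, l2 f -> l2norm f <= 1 -> l2norm (U f) <= M) -> opnorm U <= M.
Proof.
move=> hM; apply: (@ge_sup _ (ball_set U)).
  exists (l2norm (U (fun _ => 0))); exists (fun _ => 0) => //; split.
    exact: l2_0.
  by rewrite l2norm0.
by move=> _ [g [lg ng] <-]; apply: hM.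
Qed.

Lemma bop_ubound U : bounded_op U ->
  exists M : R, forall f, l2 f -> l2norm f <= 1 -> l2norm (U f) <= M.
Proof.
case=> _ _ [M hM]; exists `|M| => f lf nf.
apply: (le_trans (hM f lf)); apply: (@le_trans _ _ (`|M| * l2norm f)).
  by apply: ler_wpM2r; [exact: l2norm_ge0|exact: ler_norm].
by rewrite -[leRHS]mulr1; apply: ler_wpM2l.
Qed.

Lemma opnorm_ub' U f : bounded_op U -> l2 f -> l2norm f <= 1 ->
  l2norm (U f) <= opnorm U.
Proof. by move=> /bop_ubound [M hM] lf nf; exact: (opnorm_ub hM lf nf). Qed.

Lemma opnorm_ge0 U : bounded_op U -> 0 <= opnorm U.
Proof.
move=> bU; apply: le_trans (opnorm_ub' bU (l2_0 R X) _).
  exact: l2norm_ge0.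
by rewrite l2norm0.
Qed.

Lemma opnorm_bound U f : bounded_op U -> l2 f ->
  l2norm (U f) <= opnorm U * l2norm f.
Proof.
move=> bU lf.
have [n0|nn0] := eqVneq (l2norm f) 0.
  by rewrite (l2norm0_eq lf n0) (bop_zero bU) l2norm0 mulr0.
set n := l2norm f in nn0 *.
have np : 0 < n by rewrite lt_neqAle eq_sym nn0 l2norm_ge0.
set c := real_complex R n^-1.
have cc : cabs c = n^-1 by rewrite cabsR ger0_norm// invr_ge0 ltW.
have lf' := l2_scale c lf.
have h := opnorm_ub' bU lf' _.
rewrite l2norm_scale// in h. move: h; rewrite cc -/n mulVf// => /(_ (lexx _)).
rewrite bop_scale// l2norm_scale; last exact: bop_l2 bU lf.
rewrite cc => h.
have ip : 0 < n^-1 by rewrite invr_gt0.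
rewrite -(ler_pM2l ip) mulrCA mulVf// mulr1; exact: h.
Qed.


Lemma opnorm_ext U V : (forall f, l2 f -> U f = V f) -> opnorm U = opnorm V.
Proof.
move=> h; rewrite /opnorm; congr sup; apply/seteqP; split.
  by move=> _ [f [lf nf] <-]; exists f => //; rewrite h.
by move=> _ [f [lf nf] <-]; exists f => //; rewrite -h.
Qed.

Lemma coef_bound U x y : bounded_op U -> cabs (coef U x y) <= opnorm U.
Proof.
move=> bU; apply: (le_trans (pt_le x (bop_l2 bU (l2_delta R y)))).
apply: opnorm_ub' => //; first exact: l2_delta.
by rewrite l2norm_delta.
Qed.

Lemma bop_op0 : bounded_op (@op0 R X).
Proof.
split => //.
- by move=> f _; exact: l2_0.
- by move=> a f g _ _; apply/funext => x; rewrite /op0 mulr0 addr0.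
- by exists 0 => f _; rewrite /op0 l2norm0 mul0r.
Qed.

Lemma bop_chi (A : set X) : bounded_op (chi (R:=R) A).
Proof.
split.
- by move=> f lf; exact: l2_chi.
- move=> a f g _ _; apply/funext => x; rewrite /chi.
  by case: ifP => _; rewrite ?mulr0 ?addr0.
- by exists 1 => f lf; rewrite mul1r l2norm_chi.
Qed.

Lemma bop_comp U V : bounded_op U -> bounded_op V -> bounded_op (opcomp U V).
Proof.
move=> bU bV; split.
- by move=> f lf; apply: bop_l2 bU _; apply: bop_l2 bV lf.
- move=> a f g lf lg; rewrite /opcomp.
  have lVf := bop_l2 bV lf; have lVg := bop_l2 bV lg.
  case: (bV) => _ linV _; rewrite linV//.
  by case: (bU) => _ linU _; rewrite linU.
- exists (opnorm U * opnorm V) => f lf; rewrite /opcomp.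
  apply: (le_trans (opnorm_bound bU (bop_l2 bV lf))).
  rewrite -mulrA; apply: ler_wpM2l; first exact: opnorm_ge0.
  exact: opnorm_bound.
Qed.

Lemma bop_opadd U V : bounded_op U -> bounded_op V -> bounded_op (opadd U V).
Proof.
move=> bU bV; split.
- by move=> f lf; apply: l2_add; [apply: bop_l2 bU lf|apply: bop_l2 bV lf].
- move=> a f g lf lg; rewrite /opadd.
  case: (bV) => _ linV _; case: (bU) => _ linU _; rewrite linV// linU//.
  by apply/funext => x; rewrite mulrDr !addrA; congr (_ + _); rewrite addrAC.
- exists (opnorm U + opnorm V) => f lf; rewrite /opadd.
  apply: (le_trans (minkowski (bop_l2 bU lf) (bop_l2 bV lf))).
  by rewrite mulrDl; apply: lerD; apply: opnorm_bound.
Qed.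

Lemma bop_opscale (a : C) U : bounded_op U -> bounded_op (opscale a U).
Proof.
move=> bU; split.
- by move=> f lf; apply: l2_scale; apply: bop_l2 bU lf.
- move=> b f g lf lg; rewrite /opscale.
  case: (bU) => _ linU _; rewrite linU//.
  by apply/funext => x /=; rewrite mulrDr mulrCA.
- exists (cabs a * opnorm U) => f lf; rewrite /opscale.
  rewrite l2norm_scale; last exact: bop_l2 bU lf.
  rewrite -mulrA; apply: ler_wpM2l.
    exact: cabs_ge0.
  exact: opnorm_bound.
Qed.

Lemma opsubE U V : opsub U V = opadd U (opscale (-1) V).
Proof.
by apply/funext => f; apply/funext => x; rewrite /opsub /opadd /opscale mulN1r.
Qed.

Lemma bop_opsub U V : bounded_op U -> bounded_op V -> bounded_op (opsub U V).
Proof. by move=> bU bV; rewrite opsubE; apply: bop_opadd => //; apply: bop_opscale. Qed.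

Lemma opnorm_comp_le U V : bounded_op U -> bounded_op V ->
  opnorm (opcomp U V) <= opnorm U * opnorm V.
Proof.
move=> bU bV; apply: opnorm_le => f lf nf; rewrite /opcomp.
apply: (le_trans (opnorm_bound bU (bop_l2 bV lf))).
apply: ler_wpM2l; first exact: opnorm_ge0.
exact: opnorm_ub'.
Qed.

Lemma opnorm_add_le U V : bounded_op U -> bounded_op V ->
  opnorm (opadd U V) <= opnorm U + opnorm V.
Proof.
move=> bU bV; apply: opnorm_le => f lf nf; rewrite /opadd.
apply: (le_trans (minkowski (bop_l2 bU lf) (bop_l2 bV lf))).
by apply: lerD; apply: opnorm_ub'.
Qed.

Lemma opnorm_scale_le (a : C) U : bounded_op U ->
  opnorm (opscale a U) <= cabs a * opnorm U.
Proof.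
move=> bU; apply: opnorm_le => f lf nf; rewrite /opscale.
rewrite l2norm_scale; last exact: bop_l2 bU lf.
apply: ler_wpM2l; first exact: cabs_ge0.
exact: opnorm_ub'.
Qed.

Lemma opnorm_chi_le (A : set X) : opnorm (chi (R:=R) A) <= 1.
Proof.
by apply: opnorm_le => f lf nf; apply: le_trans (l2norm_chi A lf) nf.
Qed.

End Ops.
Section Main.
Variable R : realType.
Variable X : choiceType.
Local Notation C := (R[i])%type.
Local Notation op := (op R X).
Implicit Types f g : X -> C.
Implicit Types U V : op.
Variable d : X -> X -> R.
Hypothesis hd : is_metric d.

Lemma d_ge0 x y : 0 <= d x y. Proof. by case: hd. Qed.
Lemma d_xx x : d x x = 0. Proof. by case: hd => _ h _ _; apply/h. Qed.
Lemma d_sym x y : d x y = d y x. Proof. by case: hd. Qed.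
Lemma d_tri x y z : d x z <= d x y + d y z. Proof. by case: hd. Qed.

Lemma chi_opE (A B : set X) U V :
  opcomp (chi A) (opcomp (opadd U V) (chi B)) =
  opadd (opcomp (chi A) (opcomp U (chi B))) (opcomp (chi A) (opcomp V (chi B))).
Proof.
apply/funext => f; apply/funext => x; rewrite /opcomp /opadd /chi.
by case: ifP => _; rewrite ?addr0.
Qed.

Lemma ql_op0 : quasi_local d (@op0 R X).
Proof.
move=> eps e0; exists 1; split => // A B _.
apply: opnorm_le => f lf nf.
rewrite (_ : opcomp (chi A) (opcomp (@op0 R X) (chi B)) f = (fun _ => 0)).
  by rewrite l2norm0 ltW.
by apply/funext => x; rewrite /opcomp /chi /op0; case: ifP.
Qed.

Lemma ql_add U V : bounded_op U -> bounded_op V -> quasi_local d U ->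
  quasi_local d V -> quasi_local d (opadd U V).
Proof.
move=> bU bV qU qV eps e0.
have e2 : 0 < eps / 2 by rewrite divr_gt0.
have [r1 [r10 h1]] := qU _ e2; have [r2 [r20 h2]] := qV _ e2.
exists (r1 + r2); split; first by rewrite addr_gt0.
move=> A B hAB; rewrite chi_opE.
apply: (le_trans (opnorm_add_le _ _)).
- by apply: bop_comp; [exact: bop_chi|apply: bop_comp => //; exact: bop_chi].
- by apply: bop_comp; [exact: bop_chi|apply: bop_comp => //; exact: bop_chi].
rewrite [leRHS](splitr eps); apply: lerD.
  apply: h1 => a b Aa Bb; apply: le_trans (hAB a b Aa Bb).
  by rewrite lerDl ltW.
apply: h2 => a b Aa Bb; apply: le_trans (hAB a b Aa Bb).
by rewrite lerDr ltW.
Qed.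

Lemma ql_scale (a : C) U : bounded_op U -> quasi_local d U ->
  quasi_local d (opscale a U).
Proof.
move=> bU qU eps e0.
have ca0 := cabs_ge0 a.
have k0 : 0 < eps / (cabs a + 1) by rewrite divr_gt0// ltr_pwDr.
have [r [r0 h]] := qU _ k0.
exists r; split => // A B hAB.
rewrite (_ : opcomp (chi A) (opcomp (opscale a U) (chi B)) =
  opscale a (opcomp (chi A) (opcomp U (chi B)))); last first.
  apply/funext => f; apply/funext => x; rewrite /opcomp /opscale /chi.
  by case: ifP => _; rewrite ?mulr0.
apply: (le_trans (opnorm_scale_le _ _)).
  by apply: bop_comp; [exact: bop_chi|apply: bop_comp => //; exact: bop_chi].
apply: (le_trans (ler_wpM2l ca0 (h A B hAB))).
set k := eps / (cabs a + 1) in k0 *.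
have kk : k * (cabs a + 1) = eps by rewrite /k mulfVK// gt_eqF// ltr_pwDr.
nra.
Qed.

Lemma ql_comp U V : bounded_op U -> bounded_op V -> quasi_local d U ->
  quasi_local d V -> quasi_local d (opcomp U V).
Proof.
move=> bU bV qU qV eps e0.
have mU := opnorm_ge0 bU; have mV := opnorm_ge0 bV.
have k1 : 0 < eps / 2 / (opnorm V + 1) by rewrite !divr_gt0// ltr_pwDr.
have k2 : 0 < eps / 2 / (opnorm U + 1) by rewrite !divr_gt0// ltr_pwDr.
have [r1 [r10 h1]] := qU _ k1; have [r2 [r20 h2]] := qV _ k2.
exists (r1 + r2); split; first by rewrite addr_gt0.
move=> A B hAB.
set Cs := [set z | exists b, B b /\ d z b < r2].
have bchi := fun A : set X => @bop_chi R X A.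
set P1 := opcomp (chi A) (opcomp U (chi Cs)).
set P2 := opcomp V (chi B).
set Q1 := opcomp (chi A) U.
set Q2 := opcomp (chi (~` Cs)) (opcomp V (chi B)).
have bP1 : bounded_op P1 by apply: bop_comp => //; apply: bop_comp.
have bP2 : bounded_op P2 by apply: bop_comp.
have bQ1 : bounded_op Q1 by apply: bop_comp.
have bQ2 : bounded_op Q2 by apply: bop_comp => //; apply: bop_comp.
rewrite (_ : opnorm _ = opnorm (opadd (opcomp P1 P2) (opcomp Q1 Q2))); last first.
  apply: opnorm_ext => f lf.
  rewrite /opadd /opcomp /P1 /P2 /Q1 /Q2 /opcomp.
  have lh : l2 (V (chi B f)) := bop_l2 bV (l2_chi B lf).
  rewrite (bop_split Cs bU lh).
  by apply/funext => x; rewrite /chi; case: ifP; rewrite ?addr0.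
apply: (le_trans (opnorm_add_le _ _)); first exact: bop_comp.
  exact: bop_comp.
have hP1 : opnorm P1 <= eps / 2 / (opnorm V + 1).
  apply: h1 => a c Aa [b [Bb dcb]].
  have := hAB a b Aa Bb; have := d_tri a c b.
  move=> t1 t2; rewrite -(lerD2r r2); apply: le_trans t2 _.
  by apply: le_trans t1 _; rewrite lerD2l ltW.
have hQ2 : opnorm Q2 <= eps / 2 / (opnorm U + 1).
  apply: h2 => c b nCc Bb; rewrite leNgt; apply/negP => dcb.
  by apply: nCc; exists b.
have hP2 : opnorm P2 <= opnorm V.
  apply: (le_trans (opnorm_comp_le bV (bchi B))).
  by rewrite -[leRHS]mulr1; apply: ler_wpM2l => //; exact: opnorm_chi_le.
have hQ1 : opnorm Q1 <= opnorm U.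
  apply: (le_trans (opnorm_comp_le (bchi A) bU)).
  by rewrite -[leRHS]mul1r; apply: ler_wpM2r => //; exact: opnorm_chi_le.
have t1 := opnorm_comp_le bP1 bP2; have t2 := opnorm_comp_le bQ1 bQ2.
have p1 := opnorm_ge0 bP1; have p2 := opnorm_ge0 bP2.
have q1 := opnorm_ge0 bQ1; have q2 := opnorm_ge0 bQ2.
set k1' := eps / 2 / (opnorm V + 1) in k1 hP1 *.
set k2' := eps / 2 / (opnorm U + 1) in k2 hQ2 *.
have kk1 : k1' * (opnorm V + 1) = eps / 2 by rewrite /k1' mulfVK// gt_eqF// ltr_pwDr.
have kk2 : k2' * (opnorm U + 1) = eps / 2 by rewrite /k2' mulfVK// gt_eqF// ltr_pwDr.
have e2 : eps / 2 + eps / 2 = eps by rewrite -splitr.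
set nP1 := opnorm P1 in t1 hP1 p1 *.
set nP2 := opnorm P2 in t1 hP2 p2 *.
set nQ1 := opnorm Q1 in t2 hQ1 q1 *.
set nQ2 := opnorm Q2 in t2 hQ2 q2 *.
set nU := opnorm U in mU hQ1 kk2 *.
set nV := opnorm V in mV hP2 kk1 *.
have a1 : nP1 * nP2 <= k1' * nV by apply: ler_pM.
have a2 : nQ1 * nQ2 <= nU * k2' by apply: ler_pM.
have b1 : k1' * nV <= eps / 2 by rewrite -kk1; apply: ler_wpM2l; [exact: ltW|rewrite lerDl].
have b2 : nU * k2' <= eps / 2 by rewrite -kk2 mulrC; apply: ler_wpM2l; [exact: ltW|rewrite lerDl].
lra.
Qed.

End Main.
Section Ghost.
Variable R : realType.
Variable X : choiceType.
Local Notation C := (R[i])%type.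
Local Notation op := (op R X).
Implicit Types f g : X -> C.
Implicit Types U V : op.
Variable d : X -> X -> R.
Hypothesis hd : is_metric d.

Lemma bop_fin U g x (s : seq X) : bounded_op U -> l2 g -> uniq s ->
  U (chi [set z | z \in s] g) x = \sum_(z <- s) g z * coef U x z.
Proof.
move=> bU lg; elim: s => [|z s IH] /=.
  move=> _; rewrite big_nil.
  rewrite (_ : chi [set z | z \in [::]] g = (fun _ => 0)).
    by rewrite (bop_zero bU).
  by apply/funext => w; rewrite /chi /= asboolF.
case/andP => zs us.
rewrite (_ : chi [set w | w \in z :: s] g =
   (fun w => g z * delta R z w + chi [set w | w \in s] g w)); last first.
  apply/funext => w; rewrite /chi /delta /=.
  case: (eqVneq w z) => [->|nwz].
    by rewrite asboolT ?mem_head// asboolF ?mulr1 ?addr0//; apply/negP.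
  rewrite mulr0 add0r; congr (if _ then _ else _).
  by rewrite !asboolb in_cons (negbTE nwz).
case: (bU) => _ lin _; rewrite lin; first last.
- exact: l2_chi.
- exact: l2_delta.
by rewrite big_cons IH.
Qed.

Lemma sum_cabs_le (s : seq X) (F : X -> C) (c : R) :
  (forall z, z \in s -> cabs (F z) <= c) ->
  cabs (\sum_(z <- s) F z) <= (size s)%:R * c.
Proof.
elim: s => [|z s IH] h; first by rewrite big_nil cabs0 mul0r.
rewrite big_cons /= -addn1 natrD mulrDl mul1r [_ * c + c]addrC.
apply: (le_trans (cabsD _ _)); apply: lerD.
  by apply: h; rewrite mem_head.
by apply: IH => w ws; apply: h; rewrite in_cons ws orbT.
Qed.

Lemma ball_enum : bounded_geometry d -> forall r : R, exists N : nat,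
  forall x, exists s : seq X, [/\ uniq s, forall z, z \in s <-> d x z <= r
     & (size s <= N)%N].
Proof.
move=> hbg r; have [N hN] := hbg r; exists N => x.
have : exists s : seq X, uniq s /\ forall z, z \in s <-> d x z <= r; last first.
  move=> [s [us hs]].
  by exists s; split => //; apply: (hN x) => // y /hs.
apply: contrapT => H.
suff : forall n : nat, exists s : seq X,
    [/\ uniq s, (forall y, y \in s -> d x y <= r) & size s = n].
  move=> /(_ N.+1) [s [us hs ss]].
  by have := hN x s us hs; rewrite ss ltnn.
elim => [|n [s [us hs ss]]]; first by exists [::].
have [z hz] : exists z, ~ (z \in s <-> d x z <= r).
  apply: contrapT => nz; apply: H; exists s; split => // z.
  by apply: contrapT => hz; apply: nz; exists z.
case: (boolP (z \in s)) => zs.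
  by exfalso; apply: hz; split => // _; apply: hs.
case: (boolP (d x z <= r)) => dz; last first.
  by exfalso; apply: hz; split => h; [rewrite h in zs|rewrite h in dz].
exists (z :: s); split => //=.
- by rewrite zs us.
- by move=> y; rewrite in_cons => /orP[/eqP ->|/hs].
- by rewrite ss.
Qed.


Let d_ge0 x y : 0 <= d x y. Proof. by case: hd. Qed.
Let d_xx x : d x x = 0. Proof. by case: hd => _ h _ _; apply/h. Qed.
Let d_sym x y : d x y = d y x. Proof. by case: hd. Qed.
Let d_tri x y z : d x z <= d x y + d y z. Proof. by case: hd. Qed.

Lemma bset0 : bounded_set d set0.
Proof. by exists 0. Qed.

Lemma bsetU (B1 B2 : set X) : bounded_set d B1 -> bounded_set d B2 ->
  bounded_set d (B1 `|` B2).
Proof.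
move=> [r1 h1] [r2 h2].
have [[a0 Ha0]|n1] := pselect (exists a, B1 a); last first.
  exists r2 => a b [Ba|Ba] [Bb|Bb]; try by exfalso; apply: n1; eexists; eauto.
  exact: h2.
have [[b0 Hb0]|n2] := pselect (exists b, B2 b); last first.
  exists r1 => a b [Ba|Ba] [Bb|Bb]; try by exfalso; apply: n2; eexists; eauto.
  exact: h1.
have r10 : 0 <= r1 by apply: le_trans (h1 _ _ Ha0 Ha0); rewrite d_xx.
have r20 : 0 <= r2 by apply: le_trans (h2 _ _ Hb0 Hb0); rewrite d_xx.
have dab := d_ge0 a0 b0.
exists (r1 + r2 + d a0 b0) => a b [Ba|Ba] [Bb|Bb].
- have := h1 _ _ Ba Bb; lra.
- have := d_tri a a0 b; have := d_tri a0 b0 b.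
  have := h1 _ _ Ba Ha0; have := h2 _ _ Hb0 Bb; lra.
- have := d_tri a b0 b; have := d_tri b0 a0 b.
  have := h2 _ _ Ba Hb0; have := h1 _ _ Ha0 Bb; rewrite (d_sym b0 a0); lra.
- have := h2 _ _ Ba Bb; lra.
Qed.

Lemma bset_nbhd (B : set X) (r : R) : bounded_set d B ->
  bounded_set d [set w | exists b, B b /\ d w b <= r].
Proof.
move=> [rB hB]; exists (r + rB + r) => a b [a' [Ba' da]] [b' [Bb' db]].
have := d_tri a a' b; have := d_tri a' b' b; have := hB _ _ Ba' Bb'.
rewrite (d_sym b' b); lra.
Qed.

Lemma ghost_op0 : ghost d (@op0 R X).
Proof.
move=> eps e0; exists set0; split; first exact: bset0.
by move=> x y _ _; rewrite /coef /op0 cabs0.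
Qed.

Lemma ghost_add U V : ghost d U -> ghost d V -> ghost d (opadd U V).
Proof.
move=> gU gV eps e0.
have e2 : 0 < eps / 2 by rewrite divr_gt0.
have [B1 [b1 h1]] := gU _ e2; have [B2 [b2 h2]] := gV _ e2.
exists (B1 `|` B2); split; first exact: bsetU.
move=> x y nx ny; rewrite /coef /opadd.
apply: le_lt_trans (cabsD _ _) _; rewrite [ltRHS](splitr eps).
apply: ltrD.
  by apply: h1 => ?; [apply: nx|apply: ny]; left.
by apply: h2 => ?; [apply: nx|apply: ny]; right.
Qed.

Lemma ghost_scale (a : C) U : ghost d U -> ghost d (opscale a U).
Proof.
move=> gU eps e0.
have ca0 := cabs_ge0 a.
have k0 : 0 < eps / (cabs a + 1) by rewrite divr_gt0// ltr_pwDr.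
have [B [bB h]] := gU _ k0.
exists B; split => // x y nx ny; rewrite /coef /opscale cabsM.
have := h x y nx ny; rewrite /coef.
set k := eps / (cabs a + 1) in k0 *.
have kk : k * (cabs a + 1) = eps by rewrite /k mulfVK// gt_eqF// ltr_pwDr.
have := cabs_ge0 (U (delta R y) x).
set c := cabs (U (delta R y) x); nra.
Qed.

Lemma ghost_closed U : bounded_op U ->
  (forall eps : R, 0 < eps -> exists V, ghost_uq d V /\ opnorm (opsub U V) <= eps) ->
  ghost d U.
Proof.
move=> bU h eps e0.
have e2 : 0 < eps / 2 by rewrite divr_gt0.
have [V [[[bV _] gV] hV]] := h _ e2.
have [B [bB hB]] := gV _ e2.
exists B; split => // x y nx ny.
have -> : coef U x y = coef (opsub U V) x y + coef V x y.
  by rewrite /coef /opsub subrK.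
apply: le_lt_trans (cabsD _ _) _; rewrite [ltRHS](splitr eps).
apply: ler_ltD; last exact: hB.
apply: le_trans hV; apply: coef_bound; exact: bop_opsub.
Qed.


Hypothesis hbg : bounded_geometry d.

Lemma chi_delta (y : X) : chi [set y] (delta R y) = delta R y.
Proof.
apply/funext => w; rewrite /chi /delta.
case: (eqVneq w y) => [->|nwy]; first by rewrite asboolT.
by rewrite asboolF //; apply/eqP.
Qed.

Lemma ghost_TS U V : bounded_op U -> ghost d U -> bounded_op V ->
  quasi_local d V -> ghost d (opcomp U V).
Proof.
move=> bU gU bV qV eps e0.
have MU := opnorm_ge0 bU; have MV := opnorm_ge0 bV.
have k1 : 0 < eps / 2 / (opnorm U + 1) by rewrite !divr_gt0// ltr_pwDr.
have [r [r0 hr]] := qV _ k1.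
have [N hN] := ball_enum hbg r.
have N0 : (0 : R) <= N%:R by [].
have k2 : 0 < eps / 2 / ((N%:R + 1) * (opnorm V + 1)).
  by rewrite !divr_gt0// mulr_gt0// ltr_pwDr.
have [BU [bBU hBU]] := gU _ k2.
exists [set w | exists b, BU b /\ d w b <= r]; split; first exact: bset_nbhd.
move=> x y nx ny.
have nBx : ~ BU x by move=> Bx; apply: nx; exists x; rewrite d_xx ltW.
have [s [us hs sN]] := hN y.
set g := V (delta R y).
have lg : l2 g := bop_l2 bV (l2_delta R y).
rewrite /coef /opcomp -/g (bop_split [set z | z \in s] bU lg).
apply: le_lt_trans (cabsD _ _) _.
rewrite bop_fin //.
set k1' := eps / 2 / (opnorm U + 1) in k1 hr *.
set k2' := eps / 2 / ((N%:R + 1) * (opnorm V + 1)) in k2 hBU *.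
have t1 : cabs (\sum_(z <- s) g z * coef U x z) <= (size s)%:R * (opnorm V * k2').
  apply: sum_cabs_le => z zs; rewrite cabsM.
  apply: ler_pM; [exact: cabs_ge0|exact: cabs_ge0| |].
    exact: coef_bound.
  apply: ltW; apply: hBU => // Bz; apply: ny; exists z; split => //.
  by apply/hs.
have t2 : cabs (U (chi (~` [set z | z \in s]) g) x) <= opnorm U * k1'.
  have lc : l2 (chi (~` [set z | z \in s]) g) by apply: l2_chi.
  apply: le_trans (pt_le x (bop_l2 bU lc)) _.
  apply: le_trans (opnorm_bound bU lc) _.
  apply: ler_wpM2l => //.
  have -> : chi (~` [set z | z \in s]) g =
     opcomp (chi (~` [set z | z \in s])) (opcomp V (chi [set y])) (delta R y).
    by rewrite /opcomp chi_delta.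
  have bW : bounded_op (opcomp (chi (~` [set z | z \in s])) (opcomp V (chi [set y]))).
    by apply: bop_comp; [exact: bop_chi|apply: bop_comp => //; exact: bop_chi].
  apply: le_trans (opnorm_bound bW (l2_delta R y)) _.
  rewrite l2norm_delta mulr1; apply: hr => a b na ->.
  rewrite d_sym leNgt; apply/negP => lt; apply: na => /=.
  by apply/hs; rewrite ltW.
have kk1 : k1' * (opnorm U + 1) = eps / 2 by rewrite /k1' mulfVK// gt_eqF// ltr_pwDr.
have kk2 : k2' * ((N%:R + 1) * (opnorm V + 1)) = eps / 2.
  by rewrite /k2' mulfVK// gt_eqF// mulr_gt0// ltr_pwDr.
have sN' : (size s)%:R <= (N%:R : R) by rewrite ler_nat.
have e2 : eps / 2 + eps / 2 = eps by rewrite -splitr.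
set nU := opnorm U in MU kk1 t2 *.
set nV := opnorm V in MV kk2 t1 *.
set m := (size s)%:R in sN' t1 *.
have m0 : 0 <= m by [].
have a1 : m * (nV * k2') <= eps / 2.
  rewrite -kk2; apply: le_trans (_ : N%:R * (nV * k2') <= _).
    by apply: ler_wpM2r => //; rewrite mulr_ge0// ltW.
  have := mulr_ge0 (ltW k2) (addr_ge0 N0 MV).
  nra.
have a2 : nU * k1' < eps / 2 by rewrite -kk1 mulrDr mulr1 mulrC ltrDl.
lra.
Qed.


Lemma ghost_ST U V : bounded_op U -> quasi_local d U -> bounded_op V ->
  ghost d V -> ghost d (opcomp U V).
Proof.
move=> bU qU bV gV eps e0.
have MU := opnorm_ge0 bU; have MV := opnorm_ge0 bV.
have k1 : 0 < eps / 2 / (opnorm V + 1) by rewrite !divr_gt0// ltr_pwDr.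
have [r [r0 hr]] := qU _ k1.
have [N hN] := ball_enum hbg r.
have N0 : (0 : R) <= N%:R by [].
have k2 : 0 < eps / 2 / ((N%:R + 1) * (opnorm U + 1)).
  by rewrite !divr_gt0// mulr_gt0// ltr_pwDr.
have [BV [bBV hBV]] := gV _ k2.
exists [set w | exists b, BV b /\ d w b <= r]; split; first exact: bset_nbhd.
move=> x y nx ny.
have nBy : ~ BV y by move=> By; apply: ny; exists y; rewrite d_xx ltW.
have [s [us hs sN]] := hN x.
set f := V (delta R y).
have lf : l2 f := bop_l2 bV (l2_delta R y).
rewrite /coef /opcomp -/f (bop_split [set z | z \in s] bU lf).
apply: le_lt_trans (cabsD _ _) _.
rewrite bop_fin //.
set k1' := eps / 2 / (opnorm V + 1) in k1 hr *.
set k2' := eps / 2 / ((N%:R + 1) * (opnorm U + 1)) in k2 hBV *.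
have t1 : cabs (\sum_(z <- s) f z * coef U x z) <= (size s)%:R * (opnorm U * k2').
  apply: sum_cabs_le => z zs; rewrite cabsM mulrC.
  apply: ler_pM; [exact: cabs_ge0|exact: cabs_ge0| |].
    exact: coef_bound.
  apply: ltW; apply: hBV => // Bz; apply: nx; exists z; split => //.
  by apply/hs.
have t2 : cabs (U (chi (~` [set z | z \in s]) f) x) <= k1' * opnorm V.
  set W := opcomp (chi [set x]) (opcomp U (chi (~` [set z | z \in s]))).
  have bW : bounded_op W.
    by apply: bop_comp; [exact: bop_chi|apply: bop_comp => //; exact: bop_chi].
  have -> : U (chi (~` [set z | z \in s]) f) x = W f x.
    by rewrite /W /opcomp /chi asboolT.
  apply: le_trans (pt_le x (bop_l2 bW lf)) _.
  apply: le_trans (opnorm_bound bW lf) _.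
  apply: ler_pM => //; [exact: opnorm_ge0|exact: l2norm_ge0| |].
    apply: hr => a b -> nb.
    rewrite leNgt; apply/negP => lt; apply: nb => /=.
    by apply/hs; rewrite ltW.
  apply: opnorm_ub' => //; first exact: l2_delta.
  by rewrite l2norm_delta.
have kk1 : k1' * (opnorm V + 1) = eps / 2 by rewrite /k1' mulfVK// gt_eqF// ltr_pwDr.
have kk2 : k2' * ((N%:R + 1) * (opnorm U + 1)) = eps / 2.
  by rewrite /k2' mulfVK// gt_eqF// mulr_gt0// ltr_pwDr.
have sN' : (size s)%:R <= (N%:R : R) by rewrite ler_nat.
have e2 : eps / 2 + eps / 2 = eps by rewrite -splitr.
set nU := opnorm U in MU kk2 t1 *.
set nV := opnorm V in MV kk1 t2 *.
set m := (size s)%:R in sN' t1 *.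
have m0 : 0 <= m by [].
have a1 : m * (nU * k2') <= eps / 2.
  rewrite -kk2; apply: le_trans (_ : N%:R * (nU * k2') <= _).
    by apply: ler_wpM2r => //; rewrite mulr_ge0// ltW.
  have := mulr_ge0 (ltW k2) (addr_ge0 N0 MU).
  nra.
have a2 : k1' * nV < eps / 2 by rewrite -kk1 mulrDr mulr1 ltrDl.
lra.
Qed.

End Ghost.

Unset Implicit Arguments.

Theorem lemma5p4 (R : realType) (X : choiceType) (d : X -> X -> R)
  (hd : is_metric d) (hbg : bounded_geometry d) :
  [/\ ghost_uq d (@op0 R X),
      forall S T, ghost_uq d S -> ghost_uq d T -> ghost_uq d (opadd S T),
      forall (a : R[i]) T, ghost_uq d T -> ghost_uq d (opscale a T),
      forall S T, in_Cuq d S -> ghost_uq d T ->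
        ghost_uq d (opcomp S T) /\ ghost_uq d (opcomp T S) &
      forall T, in_Cuq d T ->
        (forall eps : R, 0 < eps ->
           exists S, ghost_uq d S /\ opnorm (opsub T S) <= eps) ->
        ghost_uq d T].
Proof.
split.
- split; [split; [exact: bop_op0|exact: ql_op0]|].
  exact: ghost_op0.
- move=> S T [[bS qS] gS] [[bT qT] gT]; split; [split|].
  + exact: bop_opadd.
  + exact: ql_add.
  + exact: ghost_add.
- move=> a T [[bT qT] gT]; split; [split|].
  + exact: bop_opscale.
  + exact: ql_scale.
  + exact: ghost_scale.
- move=> S T [bS qS] [[bT qT] gT]; split; split; try split.
  + exact: bop_comp.
  + exact: ql_comp.
  + exact: ghost_ST.
  + exact: bop_comp.
  + exact: ql_comp.
  + exact: ghost_TS.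
- move=> T [bT qT] h; split => //.
  exact: ghost_closed.
Qed.
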